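(* Let $X$ be a real Hilbert space and $A,B$ nonempty closed convex subsets of $X$, and let $v$ be the displacement vector of $(A,B)$. Suppose there exist $e\in A\cap(B-v)$ and a continuous linear functional $x^*\in X^*$ with $\|x^*\|=1$ such that $$\inf x^*(B-v)=x^*(e)=\sup x^*(A)$$ and such that $x^*$ strongly exposes $A$ at $e$. Then the couple $(A,B)$ is regular.
   Context: $\mathrm{dist}(x,S)=\inf_{s\in S}\|x-s\|$, $\mathrm{dist}(S,T)=\inf_{s\in S}\mathrm{dist}(s,T)$. $v=P_{\overline{B-A}}(0)$, the metric projection of $0$ onto the closure of $B-A$. $E=\{a\in A:\mathrm{dist}(a,B)=\mathrm{dist}(A,B)\}$, $F=\{b\in B:\mathrm{dist}(b,A)=\mathrm{dist}(A,B)\}$. The couple $(A,B)$ (with $E,F$ nonempty) is regular if for each $\epsilon>0$ there is $\delta>0$ such that $\mathrm{dist}(x,E)\le\epsilon$ whenever $x\in X$ and $\max\{\mathrm{dist}(x,A),\mathrm{dist}(x,B-v)\}\le\delta$. A functional $f\in X^*\setminus\{0\}$ strongly exposes $A$ at $a\in A$ if $f(a)=\sup f(A)$ and every sequence $\{x_n\}\subset A$ with $\lim_n f(x_n)=\sup f(A)$ converges in norm to $a$. *)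

(* Defs.v *)
From HB Require Import structures.
From mathcomp Require Import all_boot all_order all_algebra.
From mathcomp Require Import all_classical all_reals all_analysis.
Set Implicit Arguments. Unset Strict Implicit. Unset Printing Implicit Defensive.
Import Order.TTheory GRing.Theory Num.Theory.
Import numFieldNormedType.Exports.
Local Open Scope classical_set_scope.
Local Open Scope ring_scope.

Section Defs.
Context {R : realType} {X : normedModType R}.

Definition inner_product (ip : X -> X -> R) : Prop :=
  (forall x y, ip x y = ip y x) /\
  (forall (a : R) x y z, ip (a *: x + y) z = a * ip x z + ip y z) /\
  (forall x, `|x| ^+ 2 = ip x x).

Definition convex (A : set X) : Prop :=
  forall x y (t : R), A x -> A y -> 0 <= t -> t <= 1 ->
    A (t *: x + (1 - t) *: y).

Definition dist (x : X) (S : set X) : R := inf [set `|x - s| | s in S].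

Definition dist_sets (S T : set X) : R := inf [set dist s T | s in S].

Definition translate (S : set X) (v : X) : set X := [set s - v | s in S].

Definition minus_set (B A : set X) : set X := [set b - a | b in B & a in A].

Definition is_metric_projection (S : set X) (x p : X) : Prop :=
  S p /\ forall s, S s -> `|x - p| <= `|x - s|.

Definition displacement_vector (A B : set X) (v : X) : Prop :=
  is_metric_projection (closure (minus_set B A)) 0 v.

Definition Eset (A B : set X) : set X :=
  [set a | A a /\ dist a B = dist_sets A B].
Definition Fset (A B : set X) : set X :=
  [set b | B b /\ dist b A = dist_sets A B].

Definition regular_couple (A B : set X) (v : X) : Prop :=
  Eset A B !=set0 /\ Fset A B !=set0 /\
  forall eps : R, 0 < eps -> exists2 delta : R, 0 < delta &
    forall x : X, Num.max (dist x A) (dist x (translate B v)) <= delta ->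
      dist x (Eset A B) <= eps.

Definition opnorm (f : X -> R) : \bar R :=
  ereal_sup [set (`|f x|)%:E | x in [set x : X | `|x| <= 1]].

Definition strongly_exposes (f : X -> R) (A : set X) (a : X) : Prop :=
  A a /\ ereal_sup [set (f x)%:E | x in A] = (f a)%:E /\
  forall u : nat -> X, (forall n, A (u n)) ->
    (fun n => f (u n)) @ \oo --> f a -> u @ \oo --> a.

End Defs.

(* Main.v *)
Require Import Defs.
From HB Require Import structures.
From mathcomp Require Import all_boot all_order all_algebra.
From mathcomp Require Import all_classical all_reals all_analysis.
From mathcomp Require Import lra.
Import Order.TTheory GRing.Theory Num.Theory.
Import numFieldNormedType.Exports.
Local Open Scope classical_set_scope.
Local Open Scope ring_scope.

Section Helpers.
Context {R : realType} {X : normedModType R}.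

Lemma dist_le {S : set X} x {s} : S s -> dist x S <= `|x - s|.
Proof.
move=> Ss; apply: ge_inf; last by exists s.
by exists 0 => _ [y _ <-].
Qed.

Lemma dist_ge (S : set X) x r : S !=set0 ->
  (forall s, S s -> r <= `|x - s|) -> r <= dist x S.
Proof.
move=> [s Ss] H; apply: lb_le_inf; first by exists `|x - s|, s.
by move=> _ [y Sy <-]; exact: H.
Qed.

Lemma dist_lt {S : set X} {x r} : S !=set0 -> dist x S < r ->
  exists2 s, S s & `|x - s| < r.
Proof.
move=> [s Ss] /inf_lt []; first by exists `|x - s|, s.
by move=> _ [y Sy <-] H; exists y.
Qed.

End Helpers.

Theorem proposition4p15 (R : realType) (X : completeNormedModType R)
    (ip : X -> X -> R) (A B : set X) (v e : X) (xs : X -> R) :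
  inner_product ip ->
  A !=set0 -> B !=set0 -> closed A -> closed B -> convex A -> convex B ->
  displacement_vector A B v ->
  A e -> translate B v e ->
  (forall (a : R) x y, xs (a *: x + y) = a * xs x + xs y) ->
  continuous xs ->
  opnorm xs = 1%:E ->
  ereal_inf [set (xs y)%:E | y in translate B v] = (xs e)%:E ->
  ereal_sup [set (xs y)%:E | y in A] = (xs e)%:E ->
  strongly_exposes xs A e ->
  regular_couple A B v.
Proof.
move=> _ A0 B0 _ _ _ _ [_ vmin] Ae [b Bb bve] lin xsc _ hinf hsup [_ [_ hse]].
have be : b = e + v by rewrite -bve subrK.
have vle : forall a b, A a -> B b -> `|v| <= `|a - b|.
  move=> a' b' Aa Bb'; have := vmin (b' - a').
  rewrite !sub0r !normrN distrC; apply; apply: subset_closure.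
  by exists b' => //; exists a'.
have dAB : dist_sets A B = `|v|.
  apply/eqP; rewrite eq_le; apply/andP; split.
    apply: (le_trans (y := dist e B)).
      apply: ge_inf; last by exists e.
      exists `|v| => _ [a Aa <-]; apply: dist_ge => // s Bs; exact: vle.
    by apply: (le_trans (dist_le _ Bb)); rewrite be opprD addrA subrr sub0r normrN.
  apply: lb_le_inf; first by exists (dist e B), e.
  by move=> _ [a Aa <-]; apply: dist_ge => // s Bs; exact: vle.
have Ee : Eset A B e.
  split => //; rewrite dAB; apply/eqP; rewrite eq_le; apply/andP; split.
    by apply: (le_trans (dist_le _ Bb)); rewrite be opprD addrA subrr sub0r normrN.
  by apply: dist_ge => // s Bs; exact: vle.
split; first by exists e.
split.
  exists b; split => //; rewrite dAB; apply/eqP; rewrite eq_le; apply/andP; split.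
    by apply: (le_trans (dist_le _ Ae)); rewrite be addrC addKr.
  by apply: dist_ge => // s As; rewrite distrC; exact: vle.
have xs0 : xs 0 = 0.
  have := lin 1 0 0; rewrite scale1r addr0 mul1r => h.
  by apply: (addrI (xs 0)); rewrite addr0 -h.
have xsB : forall a b, xs (a - b) = xs a - xs b.
  move=> a' b'; have := lin 1 a' (- b'); rewrite scale1r mul1r => ->.
  by have := lin (-1) b' 0; rewrite xs0 !addr0 scaleN1r mulN1r => ->.
have hA : forall a, A a -> xs a <= xs e.
  by move=> a Aa; rewrite -lee_fin -hsup; apply: ereal_sup_ubound; exists a.
have hB : forall y, translate B v y -> xs e <= xs y.
  by move=> y Ty; rewrite -lee_fin -hinf; apply: ereal_inf_lbound; exists y.
have expo : forall eps : R, 0 < eps -> exists2 eta : R, 0 < eta &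
    forall a, A a -> xs e - eta < xs a -> `|a - e| < eps.
  move=> eps eps0; apply: contrapT => H.
  have H' : forall n : nat, exists a, A a /\ xs e - n.+1%:R^-1 < xs a /\ eps <= `|a - e|.
    move=> n; apply: contrapT => Hn; apply: H; exists n.+1%:R^-1 => // a Aa lt.
    rewrite ltNge; apply/negP => le; apply: Hn; by exists a.
  have [u Hu] := choice H'.
  have cv : u @ \oo --> e.
    apply: hse; first by move=> n; case: (Hu n).
    apply/cvgrPdist_lt => r r0; near=> n.
    have [Aun [lt _]] := Hu n; have le := hA _ Aun.
    have Hn : n.+1%:R^-1 < r by near: n; exact: (near_infty_natSinv_lt (PosNum r0)).
    rewrite ger0_norm ?subr_ge0 //.
    have : xs e - xs (u n) < n.+1%:R^-1 by rewrite ltrBlDr addrC -ltrBlDr.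
    by move/lt_trans; apply.
  move/cvgrPdist_lt: cv => /(_ eps eps0) [N _ /(_ N (leqnn N))].
  by have [_ [_ ]] := Hu N; rewrite distrC => /le_lt_trans H1 /H1; rewrite ltxx.
move=> eps eps0.
have e2 : 0 < eps / 2 by rewrite divr_gt0.
have [eta eta0 Heta] := expo (eps / 2) e2.
have := xsc 0; move/cvgrPdist_lt => /(_ eta eta0) /nbhs_norm0P [rho rho0 Hrho].
have e4 : 0 < eps / 4 by rewrite divr_gt0.
have r4 : 0 < rho / 4 by rewrite divr_gt0.
exists (Num.min (eps / 4) (rho / 4)); first by rewrite lt_min e4 r4.
move=> x; rewrite ge_max => /andP [dA dB].
set d := Num.min (eps / 4) (rho / 4) in dA dB.
have d0 : 0 < d by rewrite lt_min e4 r4.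
have d1 : d <= eps / 4 by rewrite ge_min lexx.
have d2 : d <= rho / 4 by rewrite ge_min lexx orbT.
have dlt : d < d + d by rewrite ltrDl.
have TB : translate B v !=set0 by exists e; exists b.
have [a Aa xa] := dist_lt A0 (le_lt_trans dA dlt).
have [y Ty xy] := dist_lt TB (le_lt_trans dB dlt).
have tri1 := ler_distD x a y.
have ay : `|a - y| < rho.
  rewrite distrC in xa; lra.
have := Hrho (a - y) ay; rewrite /= xs0 sub0r normrN xsB ltr_norml => /andP [h1 h2].
have := hB y Ty => h3.
have := Heta a Aa (ltac:(lra)) => h4.
apply: (le_trans (dist_le x Ee)).
have tri2 := ler_distD a x e.
lra.
Unshelve. all: by end_near.
Qed.
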